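(* Let $\tau_\mathsf{I} \geq 0$ and $\tau_\mathsf{D} \in [0,1)$ be real numbers and define $$\delta_\mathsf{ID}(\tau_\mathsf{I},\tau_\mathsf{D}) = \frac{\tau_\mathsf{I}+\tau_\mathsf{D}(1-\tau_\mathsf{D})}{\tau_\mathsf{I}+1-\tau_\mathsf{D}} = 1 - \frac{(1-\tau_\mathsf{D})^2}{\tau_\mathsf{I}+1-\tau_\mathsf{D}}.$$ Let $C\subseteq\Sigma^n$ (with $\Sigma$ a finite alphabet and $|C|\ge 2$) be a code of minimum Levenshtein distance $d = 2\delta n$ with $\delta > \delta_\mathsf{ID}(\tau_\mathsf{I},\tau_\mathsf{D})$, and put $\gamma = \delta - \delta_\mathsf{ID}(\tau_\mathsf{I},\tau_\mathsf{D})>0$. Then $C$ is $(\lfloor\tau_\mathsf{I} n\rfloor, \lfloor\tau_\mathsf{D} n\rfloor, \ell)$-list decodable for $$\ell = \left\lfloor \frac{\delta(\tau_\mathsf{I}+1)}{\gamma\,(\tau_\mathsf{I} + 1-\tau_\mathsf{D})}\right\rfloor.$$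
   Context: For words $x,y$ over $\Sigma$, the Levenshtein distance $d_\mathsf{L}(x,y)$ is the minimum number of single-symbol insertions and deletions needed to transform $x$ into $y$; the minimum Levenshtein distance of a code $C$ is $\min\{d_\mathsf{L}(c_1,c_2): c_1\neq c_2 \in C\}$. For a word $v$ and non-negative integers $a,b$, $B_\mathsf{L}(v,a,b)$ is the set of words obtainable from $v$ by at most $a$ insertions and at most $b$ deletions. A code $C\subseteq \Sigma^n$ is $(t_\mathsf{I},t_\mathsf{D},\ell)$-list decodable if $|B_\mathsf{L}(v,t_\mathsf{D},t_\mathsf{I})\cap C|\le \ell$ for every word $v$ over $\Sigma$ (of any length). *)

(* Defs.v *)
From HB Require Import structures.
From mathcomp Require Import all_boot all_order all_algebra.
Set Implicit Arguments. Unset Strict Implicit. Unset Printing Implicit Defensive.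
Import Order.TTheory GRing.Theory Num.Theory.

Section Lev.
Variable T : eqType.

Definition del1 (x y : seq T) : Prop :=
  exists2 i, i < size x & y = take i x ++ drop i.+1 x.
Definition ins1 (x y : seq T) : Prop := del1 y x.

Inductive idops : nat -> nat -> seq T -> seq T -> Prop :=
| idops0 x : idops 0 0 x x
| idopsI i j x y z : ins1 x y -> idops i j y z -> idops i.+1 j x z
| idopsD i j x y z : del1 x y -> idops i j y z -> idops i j.+1 x z.

Definition edits (k : nat) (x y : seq T) : Prop :=
  exists i j, i + j = k /\ idops i j x y.

Definition lev_dist_is (x y : seq T) (k : nat) : Prop :=
  edits k x y /\ forall k', edits k' x y -> k <= k'.

Definition in_ballL (v : seq T) (a b : nat) (w : seq T) : Prop :=
  exists i j, [/\ i <= a, j <= b & idops i j v w].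
End Lev.

Definition min_lev_dist (Sigma : finType) (n : nat)
    (C : {set n.-tuple Sigma}) (d : nat) : Prop :=
  (exists c1 c2, [/\ c1 \in C, c2 \in C, c1 != c2 & lev_dist_is (val c1) (val c2) d])
  /\ forall c1 c2 k, c1 \in C -> c2 \in C -> c1 != c2 ->
       lev_dist_is (val c1) (val c2) k -> d <= k.

(* C is (tI, tD, l)-list decodable: |B_L(v,tD,tI) ∩ C| <= l for every word v;
   stated as: every subset of C contained in the ball has at most l elements *)
Definition list_decodable (Sigma : finType) (n : nat)
    (C : {set n.-tuple Sigma}) (tI tD l : nat) : Prop :=
  forall (v : seq Sigma) (S : {set n.-tuple Sigma}),
    S \subset C -> (forall c, c \in S -> in_ballL v tD tI (val c)) ->
    #|S| <= l.

Local Open Scope ring_scope.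
Definition deltaID (R : numFieldType) (tauI tauD : R) : R :=
  (tauI + tauD * (1 - tauD)) / (tauI + 1 - tauD).

(* Main.v *)
Require Import Defs.
From HB Require Import structures.
From mathcomp Require Import all_boot all_order all_algebra.
From mathcomp Require Import zify ring lra.
From Stdlib Require Import Classical IndefiniteDescription.
Import Order.TTheory GRing.Theory Num.Theory.
Set Implicit Arguments. Unset Strict Implicit. Unset Printing Implicit Defensive.

Section Comb.
Variable T : eqType.

Lemma idops_cat i j i' j' (x y z : seq T) :
  idops i j x y -> idops i' j' y z -> idops (i + i') (j + j') x z.
Proof.
elim=> {i j x y} [x|i j x y w H _ IH|i j x y w H _ IH] Hz //.
- by rewrite addSn; apply: idopsI H (IH Hz).
- by rewrite addSn; apply: idopsD H (IH Hz).
Qed.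

Lemma idops_rev i j (x y : seq T) : idops i j x y -> idops j i y x.
Proof.
elim=> {i j x y} [x|i j x y w H _ IH|i j x y w H _ IH].
- exact: idops0.
- have := idops_cat IH (idopsD H (idops0 x)); by rewrite addn0 addn1.
- have := idops_cat IH (idopsI H (idops0 x)); by rewrite addn0 addn1.
Qed.

Lemma idops_cons a i j (x y : seq T) : idops i j x y -> idops i j (a :: x) (a :: y).
Proof.
elim=> {i j x y} [x|i j x y w H _ IH|i j x y w H _ IH].
- exact: idops0.
- apply: idopsI IH; case: H => k Hk ->; exists k.+1 => //.
- apply: idopsD IH; case: H => k Hk ->; exists k.+1 => //.
Qed.

Lemma idops_mask (m : bitseq) (x : seq T) : size m = size x ->
  idops 0 (size x - count id m) x (mask m x).
Proof.
elim: x m => [|a x IH] [|b m] //=; first by move=> _; exact: idops0.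
case=> Hs; have Hc : count id m <= size x by rewrite -Hs count_size.
case: b => /=.
- rewrite add1n subSS; exact: idops_cons (IH _ Hs).
- rewrite add0n subSn //; apply: idopsD (IH _ Hs); by exists 0 => //=; rewrite drop0.
Qed.

Lemma subseq_edits (w x : seq T) : subseq w x -> idops 0 (size x - size w) x w.
Proof.
case/subseqP=> m Hs ->; rewrite size_mask //; exact: idops_mask.
Qed.

Lemma idops_size i j (x y : seq T) : idops i j x y -> size y + j = size x + i.
Proof.
elim=> {i j x y} [x|i j x y w H _ IH|i j x y w H _ IH] //.
- case: H => k Hk Hx; move: IH; rewrite Hx size_cat size_take size_drop.
  move: Hk; case: (ltnP k (size y)) => // Hk _; lia.
- case: H => k Hk Hx; move: IH; rewrite Hx size_cat size_take size_drop.
  move: Hk; case: (ltnP k (size x)) => // Hk _; lia.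
Qed.


Lemma del1_split (x y : seq T) : del1 x y ->
  exists y1 a y2, x = y1 ++ a :: y2 /\ y = y1 ++ y2.
Proof.
case=> k Hk ->; case Ed: (drop k x) => [|a y2].
  by move: Hk (size_drop k x); rewrite Ed /=; lia.
exists (take k x), a, y2; split; first by rewrite -Ed cat_take_drop.
by rewrite -add1n -drop_drop Ed /= drop0.
Qed.


Lemma idops_common i j (x z : seq T) : idops i j x z ->
  exists m : bitseq, [/\ size m = size x, subseq (mask m x) z & size x <= count id m + j].
Proof.
elim=> {i j x z} [x|i j x y w H _ IH|i j x y w H _ IH].
- exists (nseq (size x) true); rewrite size_nseq mask_true // count_nseq /=.
  by rewrite mul1n leq_addr.
- case: IH => m [Hs Hsub Hc].
  case: (del1_split H) => y1 [a [y2 [Ey Ex]]].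
  move: Hs Hsub Hc; rewrite Ey Ex.
  move=> Hs; have Hs1 : size (take (size y1) m) = size y1.
    by rewrite size_take Hs size_cat /=; case: ltnP => //; lia.
  have Hd : size (drop (size y1) m) = (size y2).+1.
    by rewrite size_drop Hs size_cat /=; lia.
  rewrite -(cat_take_drop (size y1) m).
  move: Hd; case: (drop (size y1) m) => [|b m2] //= [Hd].
  rewrite mask_cat //= => Hsub Hc.
  exists (take (size y1) m ++ m2); split.
  + by rewrite !size_cat Hs1 Hd.
  + apply: subseq_trans Hsub; rewrite mask_cat //.
    apply: cat_subseq => //; case: (b) => //; exact: subseq_cons.
  + move: Hc; rewrite !size_cat !count_cat /=; by case: (b) => /=; lia.
- case: IH => m [Hs Hsub Hc].
  case: (del1_split H) => y1 [a [y2 [Ex Ey]]].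
  move: Hs Hsub Hc; rewrite Ey Ex => Hs.
  have Hs1 : size (take (size y1) m) = size y1.
    by rewrite size_take Hs size_cat; case: ltnP => //; lia.
  have Hd : size (drop (size y1) m) = size y2.
    by rewrite size_drop Hs size_cat; lia.
  rewrite -(cat_take_drop (size y1) m) mask_cat // => Hsub Hc.
  exists (take (size y1) m ++ false :: drop (size y1) m); split.
  + by rewrite !size_cat /= Hs1 Hd.
  + by rewrite mask_cat.
  + move: Hc; rewrite !size_cat !count_cat /=; lia.
Qed.

Lemma lev_exists (x y : seq T) k : edits k x y ->
  exists k0, k0 <= k /\ lev_dist_is x y k0.
Proof.
elim: k {-2}k (leqnn k) => [|K IH] k Hk He.
  exists k; split => //; split => // k' _; move: Hk; rewrite leqn0 => /eqP ->.
  done.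
case: (classic (forall k', edits k' x y -> k <= k')) => H.
  by exists k.
have [k' Hk'] : exists k', ~ (edits k' x y -> k <= k').
  by apply: not_all_ex_not.
have He' : edits k' x y by apply: NNPP => Hn; apply: Hk' => /Hn.
have Hlt : k' < k by rewrite ltnNge; apply/negP => Hle; apply: Hk'.
have [k0 [Hk0 Hl]] := IH k' ltac:(lia) He'.
exists k0; split => //; lia.
Qed.

Lemma common_edits (w x y : seq T) : subseq w x -> subseq w y ->
  size x = size y -> edits ((size x - size w) + (size y - size w)) x y.
Proof.
move=> Hx Hy _; exists (size y - size w), (size x - size w); split; first by rewrite addnC.
have := idops_cat (subseq_edits Hx) (idops_rev (subseq_edits Hy)).
by rewrite add0n addn0.
Qed.

Lemma shrink (m : bitseq) k : k <= count id m ->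
  exists m', [/\ size m' = size m, count id m' = k &
     forall s : seq T, subseq (mask m' s) (mask m s)].
Proof.
elim: m k => [|b m IH] k /=.
  rewrite leqn0 => /eqP ->; exists [::]; split => //.
case: b => /= Hk.
  case: k Hk => [|k] Hk.
    exists (nseq (size m).+1 false); rewrite size_nseq count_nseq /= mul0n.
    split => // s; case: s => [|a s] //=; by rewrite mask_false.
  have [m' [H1 H2 H3]] := IH k Hk.
  exists (true :: m'); rewrite /= H1 H2; split => // -[|a s] //=.
  by rewrite eqxx H3.
have [m' [H1 H2 H3]] := IH k Hk.
exists (false :: m'); rewrite /= H1 H2; split => // -[|a s] //=.
Qed.

Fixpoint meet (m1 m2 : bitseq) : bitseq :=
  match m1, m2 with
  | b1 :: m1', b2 :: m2' => (b1 && b2) :: meet m1' m2'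
  | _, _ => [::]
  end.

Lemma meetC m1 m2 : meet m1 m2 = meet m2 m1.
Proof. by elim: m1 m2 => [|b m IH] [|b' m'] //=; rewrite andbC IH. Qed.

Lemma meet_id m : meet m m = m.
Proof. by elim: m => [|b m IH] //=; rewrite andbb IH. Qed.

Lemma nth_meet m1 m2 p : nth false (meet m1 m2) p = nth false m1 p && nth false m2 p.
Proof.
elim: m1 m2 p => [|b m IH] [|b' m'] [|p] //=; by rewrite ?andbF ?nth_nil.
Qed.

Lemma size_meet m1 m2 : size (meet m1 m2) = minn (size m1) (size m2).
Proof. elim: m1 m2 => [|b m IH] [|b' m'] //=; rewrite IH; lia. Qed.

Lemma meet_subl m1 m2 (s : seq T) : subseq (mask (meet m1 m2) s) (mask m1 s).
Proof.
elim: m1 m2 s => [|b m IH] [|b' m'] [|a s]; rewrite ?sub0seq ?mask0 //.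
case: b; case: b'; rewrite [meet _ _]/= ?andbT ?andbF.
- by rewrite !mask_cons /= eqxx IH.
- rewrite !mask_cons /=; apply: subseq_trans (IH m' s) (subseq_cons _ _).
- exact: IH.
- exact: IH.
Qed.

End Comb.

Local Open Scope ring_scope.
Lemma count_sum (R : nzSemiRingType) (m : bitseq) N : size m = N ->
  (count id m)%:R = \sum_(p < N) ((nth false m p : nat)%:R : R).
Proof.
move=> <-; elim: m => [|b m IH] /=; first by rewrite big_ord0.
by rewrite big_ord_recl /= natrD IH.
Qed.


Lemma final_ineq (R : realFieldType) (tI tD delta n N L m : R) :
 0 <= tI -> 0 <= tD -> tD < 1 -> deltaID tI tD < delta -> 0 < n -> delta <= 1 ->
 n - tD*n <= L -> N <= L + tI*n -> 0 <= m ->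
 m * (L^+2 - N*(n - delta*n)) <= N*(L - (n - delta*n)) ->
 m <= delta*(tI+1) / ((delta - deltaID tI tD) * (tI + 1 - tD)).
Proof.
move=> htI htD htD1 hdel hn hd1 hL hN hm hmain.
set D := tI + 1 - tD.
have eD : D = tI + 1 - tD by [].
have hD : 0 < D by rewrite /D; lra.
set G := (delta - deltaID tI tD) * D.
have hG : G = delta * D - (tI + tD * (1 - tD)).
  rewrite /G /deltaID -/D; field; lra.
have hdID : tI + tD * (1 - tD) < delta * D.
  by move: hdel; rewrite /deltaID -/D ltr_pdivrMr.
have hGp : 0 < G by lra.
set X := delta * (tI + 1) / G.
have hXG : X * G = delta * (tI + 1) by rewrite /X divfK //; lra.
have hd0 : 0 <= delta.
  have : 0 <= tD * (1 - tD) by apply: mulr_ge0; lra.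
  move=> h; have : 0 < delta * D by lra.
  rewrite pmulr_lgt0 //; lra.
have hX1 : 1 <= X.
  have h1 : 0 <= delta * tD by exact: mulr_ge0.
  have h2 : 0 <= tD * (1 - tD) by apply: mulr_ge0; lra.
  have : G <= X * G by rewrite hXG hG /D; lra.
  by rewrite ler_pMl.
have hdtD : tD < delta.
  have h3 : 0 <= tI * (1 - tD) by apply: mulr_ge0; lra.
  have : 0 < (delta - tD) * D by move: hdID; rewrite /D; lra.
  by rewrite pmulr_lgt0 //; lra.
set a := tI * n. set P := n - delta * n. set L0 := n - tD * n.
have ea : a = tI * n by []. have eP : P = n - delta * n by []. have eL0 : L0 = n - tD * n by [].
have ha : 0 <= a by rewrite /a; nra.
have hP : 0 <= P by rewrite /P; nra.
have hL0 : 0 < L0 by rewrite /L0; nra.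
set H0 := L0^+2 - (L0 + a) * P.
have eH0 : H0 = n^+2 * G by rewrite /H0 hG /L0 /a /P /D; ring.
have hH0 : 0 < H0 by rewrite eH0; apply: mulr_gt0 => //; apply: exprn_gt0.
have s5 : a * L0 <= (X - 1) * H0.
  rewrite eH0 mulrCA mulrBl hXG mul1r /a /L0 hG /D.
  have : 0 <= n^+2 * (tD * (delta + tI + 1 - tD)) by apply: mulr_ge0; [apply: exprn_ge0; lra| nra].
  move=> h; nra.
set HL := L^+2 - (L + a) * P.
have eHL : HL = L^+2 - (L + a) * P by [].
have hLp : 0 < L by lra.
have s7 : H0 * L <= HL * L0.
  have e : HL * L0 - H0 * L = (L - L0) * (L * L0 + a * P) by rewrite /HL /H0; ring.
  have : 0 <= (L - L0) * (L * L0 + a * P).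
    apply: mulr_ge0; first by move: hL; rewrite /L0 subr_ge0.
    apply: addr_ge0; [apply: mulr_ge0; lra | exact: mulr_ge0].
  lra.
have s9 : 0 < HL.
  have : 0 < H0 * L by exact: mulr_gt0.
  move=> h; have : 0 < HL * L0 by lra.
  by rewrite pmulr_lgt0.
have s8 : a * L <= (X - 1) * HL.
  have h1 : (X - 1) * H0 * L <= (X - 1) * HL * L0.
    rewrite -!mulrA; apply: ler_wpM2l; lra.
  have h2 : a * L0 * L <= (X - 1) * H0 * L by apply: ler_wpM2r; lra.
  have : a * L * L0 <= (X - 1) * HL * L0 by rewrite mulrAC; lra.
  by rewrite ler_pM2r.
have s10 : (L + a) * (L - P) <= X * HL.
  have e : (L + a) * (L - P) = HL + a * L by rewrite /HL; ring.
  rewrite e; lra.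
have s11 : 0 <= L - P by rewrite /P; nra.
have s12 : N * (L - P) <= X * (L^+2 - N * P).
  have h1 : N * (L - P + X * P) <= (L + a) * (L - P + X * P).
    apply: ler_wpM2r => //; apply: addr_ge0 => //; apply: mulr_ge0; lra.
  have e : X * (L^+2) = X * HL + X * (L + a) * P by rewrite /HL; ring.
  nra.
have s13 : 0 < L^+2 - N * P.
  have : N * P <= (L + a) * P by apply: ler_wpM2r.
  rewrite /HL in s9; lra.
have : m * (L^+2 - N * P) <= X * (L^+2 - N * P) by rewrite -/P in hmain; lra.
by rewrite ler_pM2r.
Qed.

Lemma cs_sum (R : realFieldType) N (a : 'I_N -> R) :
  (\sum_p a p)^+2 <= N%:R * \sum_p (a p)^+2.
Proof.
set K := \sum_p a p; set Q := \sum_p (a p)^+2.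
have h0 : 0 <= \sum_(p < N) (N%:R * a p - K)^+2 by apply: sumr_ge0 => p _; exact: sqr_ge0.
have e : \sum_(p < N) (N%:R * a p - K)^+2 =
   \sum_(p < N) (N%:R^+2 * (a p)^+2 - (2 * N%:R * K) * a p + K^+2).
  by apply: eq_bigr => p _; ring.
rewrite e big_split sumrB /= -!mulr_sumr sumr_const card_ord -/K -/Q in h0.
case: N a @K @Q h0 e => [|N] a K Q h0 _.
  by rewrite /K /Q !big_ord0 mul0r expr0n.
have hN : 0 < (N.+1)%:R :> R by rewrite ltr0n.
have : 0 <= N.+1%:R * (N.+1%:R * Q - K^+2).
  by move: h0; rewrite -mulr_natr; nra.
rewrite pmulr_rge0 //; lra.
Qed.

Lemma pair_bound (Sigma : finType) n (C : {set n.-tuple Sigma}) d :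
  min_lev_dist C d -> forall c c', c \in C -> c' \in C -> c != c' ->
  forall w, subseq w (val c) -> subseq w (val c') -> (d + 2 * size w <= 2 * n)%N.
Proof.
move=> [_ hmin] c c' hc hc' hne w h1 h2.
have he := common_edits h1 h2 (etrans (size_tuple c) (esym (size_tuple c'))).
have [k0 [hk0 hl]] := lev_exists he.
have := hmin _ _ _ hc hc' hne hl.
have := size_subseq h1; rewrite !size_tuple in hk0 *; lia.
Qed.

Lemma mask_exists (Sigma : finType) n (v : seq Sigma) (c : n.-tuple Sigma) tI tD :
  in_ballL v tD tI (val c) ->
  exists m0 : bitseq, [/\ size m0 = size v, subseq (mask m0 v) (val c),
     (size v <= count id m0 + tI)%N & (n <= count id m0 + tD)%N].
Proof.
case=> i [j [hi hj hid]].
have [m0 [h1 h2 h3]] := idops_common hid.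
have := idops_size hid; rewrite size_tuple => hs.
have h3' : (size v <= count id m0 + j)%N := h3.
exists m0; split => //; lia.
Qed.

Theorem mainTheorem4 (R : archiRealFieldType) (tauI tauD : R)
  (Sigma : finType) (n : nat) (C : {set n.-tuple Sigma}) (d : nat) (delta : R) :
  0 <= tauI -> 0 <= tauD -> tauD < 1 ->
  (1 < #|C|)%N ->
  min_lev_dist C d ->
  d%:R = 2 * delta * n%:R ->
  deltaID tauI tauD < delta ->
  let gamma := delta - deltaID tauI tauD in
  list_decodable C (Num.truncn (tauI * n%:R)) (Num.truncn (tauD * n%:R))
    (Num.truncn ((delta * (tauI + 1)) / (gamma * (tauI + 1 - tauD)))).
Proof.
move=> htI htD htD1 hC hmin hd hdel gamma v S HSC HS.
rewrite /gamma.
set tI := Num.truncn (tauI * n%:R); set tD := Num.truncn (tauD * n%:R).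
have hn : (0 < n)%N.
  rewrite lt0n; apply/negP => /eqP hn0.
  have e : (#|Sigma| ^ n = 1)%N by rewrite hn0.
  by move: hC; have := max_card C; rewrite card_tuple e; lia.
have hnR : 0 < n%:R :> R by rewrite ltr0n.
have hpair := pair_bound hmin.
have hd1 : delta <= 1.
  case: hmin => [[c1 [c2 [h1 h2 h3 _]]] _].
  have := hpair _ _ h1 h2 h3 [::] (sub0seq _) (sub0seq _).
  rewrite /= muln0 addn0 -(ler_nat R) natrM hd => h.
  have : delta * n%:R <= 1 * n%:R by rewrite mul1r; lra.
  by rewrite ler_pM2r.
case: (posnP #|S|) => [-> // | hm].
have [c0 hc0] := card_gt0P hm.
set N := size v.
set L := maxn (N - tI) (n - tD).
have hex : forall c, exists mk : bitseq, (c \in S) ==>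
    [&& size mk == N, count id mk == L & subseq (mask mk v) (val c)].
  move=> c; case: (boolP (c \in S)) => hc; last by exists [::].
  have [m0 [h1 h2 h3 h4]] := mask_exists (HS c hc).
  have hL : (L <= count id m0)%N by rewrite /L geq_max; apply/andP; split; lia.
  have [m' [h1' h2' h3']] := @shrink Sigma _ _ hL.
  exists m'; rewrite h1' h1 h2' !eqxx /=; exact: subseq_trans (h3' v) h2.
have [mk hmk] : exists mk : n.-tuple Sigma -> bitseq, forall c, c \in S ->
    [/\ size (mk c) = N, count id (mk c) = L & subseq (mask (mk c) v) (val c)].
  exists (fun c => proj1_sig (constructive_indefinite_description _ (hex c))) => c hc.
  case: (constructive_indefinite_description _ (hex c)) => m0 /=.
  rewrite hc /= => /and3P [/eqP h1 /eqP h2 h3].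
  by split.
have hLN : (L <= N)%N by case: (hmk c0 hc0) => h1 h2 _; rewrite -h2 -h1 count_size.
have htDn : (tD < n)%N.
  rewrite -(ltr_nat R); apply: (le_lt_trans (y := tauD * n%:R)).
    by rewrite truncn_le; apply: mulr_ge0.
  by rewrite -[X in _ < X]mul1r ltr_pM2r.
have htIR : tI%:R <= tauI * n%:R :> R by rewrite truncn_le; apply: mulr_ge0.
have htDR : tD%:R <= tauD * n%:R :> R by rewrite truncn_le; apply: mulr_ge0.
have hNpos : (0 < N)%N by move: hLN; rewrite /L geq_max; lia.
pose b c (p : 'I_N) := ((nth false (mk c) p : nat)%:R : R).
pose a p := \sum_(c in S) b c p.
have hA : \sum_p a p = #|S|%:R * L%:R.
  rewrite /a exchange_big /= (eq_bigr (fun _ => L%:R)) ?sumr_const ?mulr_natl //.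
  move=> c hc; case: (hmk c hc) => h1 h2 _.
  by rewrite /b -(count_sum _ h1) h2.
have e1 : forall c c', c \in S -> c' \in S ->
    (count id (meet (mk c) (mk c')))%:R = \sum_(p < N) b c p * b c' p.
  move=> c c' hc hc'; case: (hmk c hc) => h1 _ _; case: (hmk c' hc') => h1' _ _.
  rewrite (count_sum _ (N:=N)); last by rewrite size_meet h1 h1' minnn.
  by apply: eq_bigr => p _; rewrite nth_meet /b -natrM mulnb.
have hQ : \sum_p (a p)^+2 =
    \sum_(c in S) \sum_(c' in S) (count id (meet (mk c) (mk c')))%:R.
  transitivity (\sum_(c in S) \sum_(c' in S) \sum_(p < N) b c p * b c' p); last first.
    by apply: eq_bigr => c hc; apply: eq_bigr => c' hc'; rewrite e1.
  transitivity (\sum_(c in S) \sum_(p < N) \sum_(c' in S) b c p * b c' p); last first.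
    by apply: eq_bigr => c hc; rewrite exchange_big.
  rewrite exchange_big; apply: eq_bigr => p _; rewrite /a expr2 big_distrl.
  by apply: eq_bigr => c hc; rewrite big_distrr.
set P := n%:R - delta * n%:R.
have hB : \sum_(c in S) \sum_(c' in S) ((count id (meet (mk c) (mk c')))%:R : R) <=
    \sum_(c in S) \sum_(c' in S) (P + (c == c')%:R * (L%:R - P)).
  apply: ler_sum => c hc; apply: ler_sum => c' hc'.
  case: (hmk c hc) => h1 h2 h3; case: (hmk c' hc') => h1' h2' h3'.
  case: eqP => [<- | hne].
    by rewrite meet_id h2 mul1r addrC subrK.
  rewrite mul0r addr0.
  have hw1 : subseq (mask (meet (mk c) (mk c')) v) (val c) :=
    subseq_trans (meet_subl _ _ v) h3.
  have hw2 : subseq (mask (meet (mk c) (mk c')) v) (val c').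
    by rewrite meetC; exact: subseq_trans (meet_subl _ _ v) h3'.
  have := hpair c c' (subsetP HSC _ hc) (subsetP HSC _ hc') (introN eqP hne) _ hw1 hw2.
  rewrite size_mask ?size_meet ?h1 ?h1' ?minnn //.
  rewrite -(ler_nat R) natrD natrM hd => h; rewrite /P; lra.
have hS : \sum_(c in S) \sum_(c' in S) (P + (c == c')%:R * (L%:R - P)) =
    #|S|%:R * (#|S|%:R * P + (L%:R - P)).
  rewrite (eq_bigr (fun _ => #|S|%:R * P + (L%:R - P))) ?sumr_const; last first.
    move=> c hc; rewrite big_split /= sumr_const -[P *+ _]mulr_natl.
  congr (_ + _); rewrite (bigD1 c) //= eqxx mul1r big1 ?addr0 // => c' /andP [_ hne].
  by rewrite eq_sym (negbTE hne) mul0r.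
  by rewrite [RHS]mulr_natl.
have hcs := cs_sum a; rewrite hA hQ in hcs.
set mR := #|S|%:R in hcs hS *; set NR := N%:R in hcs *; set LR := L%:R in hcs hS hB *.
have hmR : 0 < mR by rewrite /mR ltr0n.
have hNR : 0 <= NR by rewrite /NR ler0n.
have hmain : mR * (LR^+2 - NR * P) <= NR * (LR - P).
  have h1 : (mR * LR)^+2 <= NR * (mR * (mR * P + (LR - P))).
    apply: (le_trans hcs); apply: ler_wpM2l => //; rewrite -hS; exact: hB.
  have h2 : mR * (mR * (LR^+2 - NR * P)) <= mR * (NR * (LR - P)).
    have e1' : mR * (mR * (LR^+2 - NR * P)) = (mR * LR)^+2 - NR * (mR * (mR * P)) by ring.
    have e2' : mR * (NR * (LR - P)) = NR * (mR * (mR * P + (LR - P))) - NR * (mR * (mR * P)) by ring.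
    rewrite e1' e2'; lra.
  by rewrite ler_pM2l in h2.
have hL1 : n%:R - tauD * n%:R <= LR.
  have : (n <= L + tD)%N.
    apply: leq_trans (leq_add (leq_maxr (N - tI) _) (leqnn tD)).
    by rewrite subnK // ltnW.
  rewrite -(ler_nat R) natrD -/LR => h.
  by rewrite lerBlDr; apply: le_trans h _; rewrite lerD2l.
have hL2 : NR <= LR + tauI * n%:R.
  have : (N <= L + tI)%N by rewrite addnC -leq_subLR leq_maxl.
  rewrite -(ler_nat R) natrD -/LR -/NR => h.
  by apply: le_trans h _; rewrite lerD2l.
have hfin := final_ineq htI htD htD1 hdel hnR hd1 hL1 hL2 (ltW hmR) hmain.
rewrite truncn_ge_nat //; apply: le_trans (ltW hmR) hfin.
Qed.
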